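(* Let $(E,p,X)$ be an étalé space with $X$ a Boolean space. Let $X^{\ast}$ be the Boolean algebra of compact-open subsets of $X$ (under inclusion) and $E^{\ast}$ the set of compact-open local sections of $E$. Let $\widetilde p\colon E^{\ast}\to X^{\ast}$ be $C\mapsto p(C)$, and for compact-open $A\supseteq B$ in $X$ and $C\in E^{\ast}$ with $p(C)=A$ define $C|^A_B=C\cap p^{-1}(B)$. Then $\widetilde p\colon E^{\ast}\to X^{\ast}$ is a Boolean set.
   Context: A Boolean space is a Hausdorff space with a basis of compact-open sets. An étalé space $(E,p,X)$: topological spaces with a surjective local homeomorphism $p\colon E\to X$. A (open) local section is an open $A\subseteq E$ with $p|_A$ injective. Convention: a ''Boolean algebra'' means a generalized Boolean algebra (relatively complemented distributive lattice with $0$). Presheaf of sets over a meet semilattice $E$: pairwise disjoint sets $X_e$, restriction maps $x\mapsto x|^e_f$ for $e\ge f$ with $|^e_e=\mathrm{id}$ and $(x|^e_f)|^f_g=x|^e_g$; $p(x)=e$ iff $x\in X_e$; global support: all $X_e\neq\emptyset$. Order: $x\le y$ iff $p(x)\le p(y)$ and $x=y|^{p(y)}_{p(x)}$. Compatibility $x\sim y$: $x\wedge y$ exists and $p(x\wedge y)=p(x)\wedge p(y)$. A Boolean set is a presheaf with global support over a Boolean algebra such that the order has least element $0$, compatible pairs have joins, and $p(x)=0\Rightarrow x=0$. *)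

(* Defs.v *)
From HB Require Import structures.
From mathcomp Require Import all_boot.
From mathcomp Require Import boolp classical_sets topology.
Set Implicit Arguments. Unset Strict Implicit. Unset Printing Implicit Defensive.
Local Open Scope classical_set_scope.

Definition boolean_space (X : topologicalType) : Prop :=
  hausdorff_space X /\
  (forall (U : set X) (x : X), open U -> U x ->
     exists B : set X, open B /\ compact B /\ B x /\ B `<=` U).

Definition local_homeomorphism (E X : topologicalType) (p : E -> X) : Prop :=
  forall e : E, exists U : set E,
    [/\ open U, U e, open (p @` U),
        {in U &, injective p} &
        {within U, continuous p}] /\
        (forall V : set E, open V -> V `<=` U -> open (p @` V)).

Definition etale_space (E X : topologicalType) (p : E -> X) : Prop :=
  (forall x : X, exists e : E, p e = x) /\ local_homeomorphism p.

Definition local_section (E X : topologicalType) (p : E -> X) (A : set E) : Prop :=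
  open A /\ {in A &, injective p}.

Definition compact_open_section (E X : topologicalType) (p : E -> X) (A : set E)
  : Prop := local_section p A /\ compact A.

Definition compact_open_subset (X : topologicalType) (A : set X) : Prop :=
  open A /\ compact A.

Section OrderDefs.
Variables (B : Type) (inB : B -> Prop) (le : B -> B -> Prop).

Definition is_partial_order : Prop :=
  [/\ (forall a, inB a -> le a a),
      (forall a b, inB a -> inB b -> le a b -> le b a -> a = b) &
      (forall a b c, inB a -> inB b -> inB c -> le a b -> le b c -> le a c)].

Definition is_meet (a b m : B) : Prop :=
  [/\ inB m, le m a, le m b &
      forall c, inB c -> le c a -> le c b -> le c m].

Definition is_join (a b j : B) : Prop :=
  [/\ inB j, le a j, le b j &
      forall c, inB c -> le a c -> le b c -> le j c].

Definition is_least (z : B) : Prop := inB z /\ forall a, inB a -> le z a.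

Definition generalized_boolean_algebra : Prop :=
  is_partial_order /\
  [/\ (forall a b, inB a -> inB b -> exists m, is_meet a b m),
      (forall a b, inB a -> inB b -> exists j, is_join a b j),
      (exists z, is_least z),
      (* distributivity: a /\ (b \/ c) = (a /\ b) \/ (a /\ c) *)
      (forall a b c bc abc ab ac r, inB a -> inB b -> inB c ->
         is_join b c bc -> is_meet a bc abc -> is_meet a b ab -> is_meet a c ac ->
         is_join ab ac r -> abc = r) &
      (* relative complements: for a <= x <= b there is y with
         x /\ y = a and x \/ y = b *)
      (forall a x b, inB a -> inB x -> inB b -> le a x -> le x b ->
         exists y, inB y /\ is_meet x y a /\ is_join x y b)].
End OrderDefs.

(* Presheaf data: elements are the t : T with inS t; the base is the set of
   b : B with inB b ordered by le; p t = e means t belongs to X_e (so the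
   X_e are pairwise disjoint); res e f t is the restriction t|^e_f. *)
Section Presheaf.
Variables (T B : Type) (inS : T -> Prop) (inB : B -> Prop) (le : B -> B -> Prop)
          (p : T -> B) (res : B -> B -> T -> T).

Definition is_presheaf : Prop :=
  [/\ (forall t, inS t -> inB (p t)),
      (forall e f t, inB e -> inB f -> le f e -> inS t -> p t = e ->
          inS (res e f t) /\ p (res e f t) = f),
      (forall e t, inB e -> inS t -> p t = e -> res e e t = t) &
      (forall e f g t, inB e -> inB f -> inB g -> le f e -> le g f ->
          inS t -> p t = e -> res f g (res e f t) = res e g t)].

Definition global_support : Prop :=
  forall e, inB e -> exists t, inS t /\ p t = e.

Definition elt_le (x y : T) : Prop := le (p x) (p y) /\ x = res (p y) (p x) y.

Definition compatible (x y : T) : Prop :=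
  exists m, is_meet inS elt_le x y m /\ is_meet inB le (p x) (p y) (p m).

Definition boolean_set : Prop :=
  [/\ generalized_boolean_algebra inB le,
      is_presheaf,
      global_support &
      exists z : T, [/\ is_least inS elt_le z,
        (forall x y, inS x -> inS y -> compatible x y ->
            exists j, is_join inS elt_le x y j) &
        (forall x, inS x -> is_least inB le (p x) -> x = z)]].
End Presheaf.

(* Main.v *)
Require Import Defs.
From mathcomp Require Import all_boot.
From mathcomp Require Import boolp classical_sets topology.
Set Implicit Arguments. Unset Strict Implicit. Unset Printing Implicit Defensive.
Local Open Scope classical_set_scope.

Lemma et_cont (E X : topologicalType) (p : E -> X) :
  etale_space p -> continuous p.
Proof.
move=> [_ lh] e; have [U [[oU Ue _ _ cU] _]] := lh e.
move: cU; rewrite continuous_open_subspace // => cU.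
by apply: cU; rewrite inE.
Qed.

Lemma et_open (E X : topologicalType) (p : E -> X) :
  etale_space p -> forall V, open V -> open (p @` V).
Proof.
move=> [_ lh] V oV.
have -> : p @` V = \bigcup_(e in V) (p @` (V `&` projT1 (cid (lh e)))).
  apply/seteqP; split => [_ [e Ve <-]|_ [e Ve [a [Va Ua] <-]]]; last by exists a.
  exists e => //; exists e => //; split => //.
  by case: (cid (lh e)) => U [[]].
apply: bigcup_open => e Ve; case: (cid (lh e)) => U /= [[oU _ _ _ _] H].
by apply: H; [exact: openI|exact: subIsetr].
Qed.

Lemma key_compact (E X : topologicalType) (p : E -> X) (C K : set E) :
  (forall V, open V -> open (p @` V)) -> open C -> {in C &, injective p} ->
  K `<=` C -> compact (p @` K) -> compact K.
Proof.
move=> popen oC inj KC cK F PF FK.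
have [x [[k Kk <-] clx]] := cK (p @ F) (fmap_proper_filter p PF)
  (filterS (fun a Ka => ex_intro2 _ _ a Ka erefl) FK).
exists k; split => // S N FS; rewrite nbhsE => -[O [oO Ok] ON].
have FSK : F (S `&` K) by exact: filterI.
have H : F (p @^-1` (p @` (S `&` K))).
  by apply: (@filterS _ F _ _ _ _ FSK) => a Ka; exists a.
have nb : nbhs (p k) (p @` (O `&` C)).
  apply: open_nbhs_nbhs; split; first by apply: popen; exact: openI.
  by exists k => //; split => //; exact: KC.
have [_ [[a [Sa Ka] <-] [b [Ob Cb] eab]]] := clx _ _ H nb.
have ab : a = b by apply: inj; rewrite ?inE //; exact: KC.
by exists a; split => //; apply: ON; rewrite ab.
Qed.

Lemma cox_img (E X : topologicalType) (p : E -> X) (C : set E) :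
  etale_space p -> compact_open_section p C -> compact_open_subset (p @` C).
Proof.
move=> ep [[oC _] cC]; split; first exact: et_open.
by apply: continuous_compact => //; apply: continuous_subspaceT; exact: et_cont.
Qed.

Lemma coxI (X : topologicalType) (A B : set X) : hausdorff_space X ->
  compact_open_subset A -> compact_open_subset B -> compact_open_subset (A `&` B).
Proof.
move=> hX [oA cA] [oB cB]; split; first exact: openI.
by apply: compact_closedI => //; exact: compact_closed.
Qed.

Lemma coxU (X : topologicalType) (A B : set X) :
  compact_open_subset A -> compact_open_subset B -> compact_open_subset (A `|` B).
Proof. by move=> [oA cA] [oB cB]; split; [exact: openU|exact: compactU]. Qed.

Lemma coxD (X : topologicalType) (A B : set X) : hausdorff_space X ->
  compact_open_subset A -> compact_open_subset B -> compact_open_subset (A `\` B).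
Proof.
move=> hX [oA cA] [oB cB]; split.
  by apply: openI => //; apply: closed_openC; exact: compact_closed.
by apply: compact_closedI => //; exact: open_closedC.
Qed.

Lemma cox0 (X : topologicalType) : compact_open_subset (@set0 X).
Proof. by split; [exact: open0|exact: compact0]. Qed.

Lemma cos_res (E X : topologicalType) (p : E -> X) (C : set E) (B : set X) :
  hausdorff_space X -> etale_space p -> compact_open_section p C ->
  compact_open_subset B -> B `<=` p @` C ->
  compact_open_section p (C `&` p @^-1` B) /\ p @` (C `&` p @^-1` B) = B.
Proof.
move=> hX ep [[oC iC] cC] [oB cB] BC.
have img : p @` (C `&` p @^-1` B) = B.
  apply/seteqP; split => [_ [a [_ Ba] <-] //|b Bb].
  by have [a Ca ab] := BC _ Bb; exists a => //; split => //=; rewrite ab.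
split => //; split; first split.
- by apply: openI => //; move/continuousP: (et_cont ep); apply.
- by move=> a b; rewrite !inE => -[Ca _] [Cb _]; apply: iC; rewrite inE.
- apply: (key_compact (et_open ep) oC iC); first exact: subIsetl.
  by rewrite img.
Qed.

Lemma cos0 (E X : topologicalType) (p : E -> X) : compact_open_section p set0.
Proof. by split; [split; [exact: open0|move=> ? ?; rewrite inE]|exact: compact0]. Qed.

Lemma cos_union (E X : topologicalType) (p : E -> X) (C D : set E) :
  hausdorff_space X -> etale_space p -> compact_open_section p C ->
  compact_open_section p D ->
  exists F, compact_open_section p F /\ p @` F = p @` C `|` p @` D.
Proof.
move=> hX ep cC cD.
have [cD' iD'] := cos_res hX ep cD (coxD hX (cox_img ep cD) (cox_img ep cC))
  (fun y (h : (p @` D `\` p @` C) y) => h.1).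
set D' := D `&` _ in cD' iD'.
move: cC cD' => [[oC iC] kC] [[oD' iD] kD'].
exists (C `|` D'); split; last first.
  rewrite image_setU iD'; apply/seteqP; split => y.
    by case=> [h|[h _]]; [left|right].
  move=> h; case: (pselect ((p @` C) y)) => [|nC]; first by left.
  by case: h => h; [|right; split].
split; last exact: compactU.
split; first exact: openU.
have dis : forall a b, C a -> D' b -> p a <> p b.
  move=> a b Ca [_ [_ nb]] e; apply: nb; rewrite -e; exact/imageP.
move=> a b; rewrite !inE => -[Ca|Da] [Cb|Db] e.
- by apply: iC; rewrite ?inE.
- by case: (dis _ _ Ca Db e).
- by case: (dis _ _ Cb Da (esym e)).
- by apply: iD; rewrite ?inE.
Qed.

Lemma local_sec (E X : topologicalType) (p : E -> X) (A : set X) (x : X) :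
  boolean_space X -> etale_space p -> compact_open_subset A -> A x ->
  exists W, [/\ compact_open_subset W, W x, W `<=` A &
    exists C, compact_open_section p C /\ p @` C = W].
Proof.
move=> [hX bX] ep [oA kA] Ax.
have [e pe] := ep.1 x.
have [U [[oU Ue opU iU _] _]] := ep.2 e.
have [W [oW [kW [Wx WUA]]]] := bX (p @` U `&` A) x (openI opU oA)
  (conj (ex_intro2 _ _ e Ue pe) Ax).
have img : p @` (U `&` p @^-1` W) = W.
  apply/seteqP; split => [_ [a [_ Ba] <-] //|b Bb].
  have [[a Ua ab] _] := WUA _ Bb.
  by exists a => //; split => //=; rewrite ab.
exists W; split => //; first by move=> y /WUA [].
exists (U `&` p @^-1` W); split => //; split; first split.
- by apply: openI => //; move/continuousP: (et_cont ep); apply.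
- by move=> a b; rewrite !inE => -[Ca _] [Cb _]; apply: iU; rewrite inE.
- apply: (key_compact (et_open ep) oU iU); first exact: subIsetl.
  by rewrite img.
Qed.

Lemma global_sec (E X : topologicalType) (p : E -> X) (A : set X) :
  boolean_space X -> etale_space p -> compact_open_subset A ->
  exists C, compact_open_section p C /\ p @` C = A.
Proof.
move=> bX ep cA; apply: contrapT => nP.
pose P G := exists C, compact_open_section p C /\ p @` C = G.
pose D := [set G | [/\ compact_open_subset G, G `<=` A & P G]].
pose Bf := fun G : set X => A `\` G.
have FF : Filter (filter_from D Bf).
  apply: filter_from_filter.
    by exists set0; split => //; [exact: cox0|exists set0; split;
      [exact: cos0|exact: image_set0]].
  move=> G H [cG GA [C [sC eC]]] [cH HA [C' [sC' eC']]].
  exists (G `|` H); last by move=> y [Ay nGH]; split; split => // ?; apply: nGH;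
    [left|right].
  split; [exact: coxU| by move=> y []; [apply: GA|apply: HA]|].
  have [F [sF eF]] := cos_union bX.1 ep sC sC'.
  by exists F; split => //; rewrite eF eC eC'.
have PF : ProperFilter (filter_from D Bf).
  apply: (filter_from_proper FF) => G [cG GA [C [sC eC]]].
  apply: contrapT => ne; apply: nP; exists C; split => //; rewrite eC.
  apply/seteqP; split => // y Ay; apply: contrapT => nG; apply: ne.
  by exists y.
have D0 : D set0.
  by split => //; [exact: cox0|exists set0; split; [exact: cos0|exact: image_set0]].
have FA : filter_from D Bf A by exists set0 => // y [].
have [x [Ax clx]] := cA.2 _ PF FA.
have [W [cW Wx WA PW]] := local_sec bX ep cA Ax.
have FW : filter_from D Bf (A `\` W) by exists W.
have nW : nbhs x W by apply: open_nbhs_nbhs; split => //; exact: cW.1.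
by have [y [[_ nWy] Wy]] := clx _ _ FW nW.
Qed.


Lemma meet_eq (X : topologicalType) (a b m : set X) : hausdorff_space X ->
  compact_open_subset a -> compact_open_subset b ->
  is_meet (@compact_open_subset X) (@subset X) a b m -> m = a `&` b.
Proof.
move=> hX ca cb [cm ma mb H]; apply/seteqP; split.
  by move=> y my; split; [exact: ma|exact: mb].
by apply: H; [exact: coxI|exact: subIsetl|exact: subIsetr].
Qed.

Lemma join_eq (X : topologicalType) (a b j : set X) :
  compact_open_subset a -> compact_open_subset b ->
  is_join (@compact_open_subset X) (@subset X) a b j -> j = a `|` b.
Proof.
move=> ca cb [cj aj bj H]; apply/seteqP; split; last first.
  by move=> y [] ?; [exact: aj|exact: bj].
by apply: H; [exact: coxU|exact: subsetUl|exact: subsetUr].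
Qed.

Lemma meetI (X : topologicalType) (a b : set X) : hausdorff_space X ->
  compact_open_subset a -> compact_open_subset b ->
  is_meet (@compact_open_subset X) (@subset X) a b (a `&` b).
Proof.
move=> hX ca cb; split; [exact: coxI|exact: subIsetl|exact: subIsetr|].
by move=> c _ ca' cb' y cy; split; [exact: ca'|exact: cb'].
Qed.

Lemma joinU (X : topologicalType) (a b : set X) :
  compact_open_subset a -> compact_open_subset b ->
  is_join (@compact_open_subset X) (@subset X) a b (a `|` b).
Proof.
move=> ca cb; split; [exact: coxU|exact: subsetUl|exact: subsetUr|].
by move=> c _ ac bc y [] ?; [exact: ac|exact: bc].
Qed.

Lemma gba (X : topologicalType) : hausdorff_space X ->
  generalized_boolean_algebra (@compact_open_subset X) (@subset X).
Proof.
move=> hX; split; first split.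
- by move=> a _; exact: subset_refl.
- by move=> a b _ _ ab ba; rewrite eqEsubset.
- by move=> a b c _ _ _; exact: subset_trans.
split.
- by move=> a b ca cb; exists (a `&` b); exact: meetI.
- by move=> a b ca cb; exists (a `|` b); exact: joinU.
- by exists set0; split; [exact: cox0|move=> a _; exact: sub0set].
- move=> a b c bc abc ab ac r ca cb cc jbc mabc mab mac jr.
  have ebc := join_eq cb cc jbc.
  have cbc : compact_open_subset bc by rewrite ebc; exact: coxU.
  have eabc := meet_eq hX ca cbc mabc.
  have eab := meet_eq hX ca cb mab; have eac := meet_eq hX ca cc mac.
  have cab : compact_open_subset ab by rewrite eab; exact: coxI.
  have cac : compact_open_subset ac by rewrite eac; exact: coxI.
  have er := join_eq cab cac jr.
  by rewrite er eabc ebc eab eac; exact: setIUr.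
- move=> a x b ca cx cb ax xb; exists (a `|` (b `\` x)).
  have cy : compact_open_subset (a `|` (b `\` x)) by apply: coxU => //; exact: coxD.
  split => //; split.
  + split; [exact: ca|exact: ax|by move=> y ay; left|].
    move=> c _ cx' cy' y cy''; case: (cy' _ cy'') => // -[_ nxy].
    by case: nxy; exact: cx'.
  + split; [exact: cb|exact: xb|by move=> y [ay|[]] //; exact/xb/ax|].
    move=> c _ xc yc y by'; case: (pselect (x y)) => [xy|nxy]; first exact: xc.
    by apply: yc; right.
Qed.

Lemma join_compat (E X : topologicalType) (p : E -> X) (x y : set E) :
  hausdorff_space X -> etale_space p ->
  compact_open_section p x -> compact_open_section p y ->
  compatible (compact_open_section p) (@compact_open_subset X) (@subset X)
    (fun C : set E => p @` C)
    (fun (A B : set X) (C : set E) => C `&` p @^-1` B) x y ->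
  exists j, is_join (compact_open_section p)
    (elt_le (@subset X) (fun C : set E => p @` C)
       (fun (A B : set X) (C : set E) => C `&` p @^-1` B)) x y j.
Proof.
move=> hX ep cx cy [m [[cm [pmx mx] [pmy my] _] mB]] /=.
have epm := meet_eq hX (cox_img ep cx) (cox_img ep cy) mB.
move: (cx) (cy) (cm) => [[ox ix] kx] [[oy iy] ky] [[om im] km].
have ma : forall a, x a -> (p @` y) (p a) -> m a.
  by move=> a xa pya; rewrite mx; split => //; change ((p @` m) (p a)); rewrite epm; split => //; exists a.
have mb : forall b, y b -> (p @` x) (p b) -> m b.
  by move=> b yb pxb; rewrite my; split => //; change ((p @` m) (p b)); rewrite epm; split => //; exists b.
have ij : {in x `|` y &, injective p}.
  move=> a b; rewrite !inE => -[xa|ya] [xb|yb] e.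
  - by apply: ix; rewrite ?inE.
  - have m1 := ma a xa (ex_intro2 _ _ b yb (esym e)).
    have m2 := mb b yb (ex_intro2 _ _ a xa e).
    by apply: im; rewrite ?inE.
  - have m1 := mb a ya (ex_intro2 _ _ b xb (esym e)).
    have m2 := ma b xb (ex_intro2 _ _ a ya e).
    by apply: im; rewrite ?inE.
  - by apply: iy; rewrite ?inE.
have cj : compact_open_section p (x `|` y).
  by split; [split; [exact: openU|exact: ij]|exact: compactU].
exists (x `|` y); split => //.
- split; first by apply: image_subset; exact: subsetUl.
  apply/seteqP; split => a.
    by move=> xa; split; [left|exists a].
  move=> [[xa|ya] [b xb e]] //.
  have -> : a = b by apply: ij; rewrite ?inE; [right|left|by rewrite e].
  done.
- split; first by apply: image_subset; exact: subsetUr.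
  apply/seteqP; split => a.
    by move=> ya; split; [right|exists a].
  move=> [[xa|ya] [b yb e]] //.
  have -> : a = b by apply: ij; rewrite ?inE; [left|right|by rewrite e].
  done.
- move=> c cc [pxc xc] [pyc yc]; split.
    by rewrite image_setU => z [] ?; [apply: pxc|apply: pyc].
  apply/seteqP; split => a.
    move=> ja; split; last by exists a.
    case: ja => h; [move: h; rewrite {1}xc|move: h; rewrite {1}yc]; by case.
  move=> [ca] h; change ((p @` (x `|` y)) (p a)) in h.
  rewrite image_setU in h; case: h => h; [left; rewrite xc|right; rewrite yc].
    by split.
  by split.
Qed.

Unset Implicit Arguments.
Set Strict Implicit.

Theorem proposition3p1 (E X : topologicalType) (p : E -> X) :
  boolean_space X -> etale_space p ->
  boolean_set (compact_open_section p) (@compact_open_subset X) (@subset X)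
    (fun C : set E => p @` C)
    (fun (A B : set X) (C : set E) => C `&` p @^-1` B).
Proof.
move=> bX ep; have hX := bX.1.
split.
- exact: gba.
- split.
  + by move=> t ct; exact: cox_img.
  + move=> e f t ce cf fe ct pt; apply: cos_res => //; by rewrite pt.
  + move=> e t _ _ <-; apply/seteqP; split => [y []//|y ty]; split => //.
    by exists y.
  + move=> e f g t _ _ _ fe gf _ _ /=; apply/seteqP; split => y.
      by move=> [[ty _] gy]; split.
    by move=> [ty gy]; split => //; split => //; exact: gf.
- by move=> e ce; apply: global_sec.
- exists set0; split.
  + split; first exact: cos0.
    move=> a _; split; first by rewrite image_set0; exact: sub0set.
    by rewrite image_set0; apply/seteqP; split => y // [_ []].
  + by move=> x y cx cy; exact: join_compat.
  + move=> x cx [_ lx]; have := lx _ (@cox0 X).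
move=> h; apply/seteqP; split => y // xy.
    by have [] := h (p y) (ex_intro2 _ _ y xy erefl).
Qed.
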